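(* Let $q$ be a power of a prime $p$ and let $X=\{F=0\}\subset\mathbb{P}^n$ be a Frobenius nonclassical hypersurface of degree $d$ over $\mathbb{F}_q$. Assume there exists a line $L\subset\mathbb{P}^n$ defined over $\mathbb{F}_q$ with $L\not\subset X$ such that the intersection $X\cap L$ is not a $p$-th power (i.e. the binary form $F|_L$ is not a $p$-th power). Then $X\cap L$ contains at least one $\mathbb{F}_q$-point, and the intersection multiplicity of $X$ and $L$ at every point of $X\cap L$ not defined over $\mathbb{F}_q$ is divisible by $p$.
   Context: $X$ is Frobenius nonclassical if $F$ divides $\sum_{i=0}^n x_i^q\frac{\partial F}{\partial x_i}$. *)

(* Defs.v *)
From HB Require Import structures.
From mathcomp Require Import all_boot all_order all_algebra all_field.
From mathcomp Require Export mpoly.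
Set Implicit Arguments. Unset Strict Implicit. Unset Printing Implicit Defensive.
Import GRing.Theory.
Local Open Scope ring_scope.

Definition mdvd (n : nat) (R : ringType) (a b : {mpoly R[n]}) : Prop :=
  exists c : {mpoly R[n]}, b = c * a.

Definition bS (R : ringType) : {mpoly R[2]} := 'X_(@ord0 1).
Definition bT (R : ringType) : {mpoly R[2]} := 'X_(@ord_max 1).

Definition frob_nonclassical (n : nat) (R : ringType) (q : nat)
  (F : {mpoly R[n]}) : Prop :=
  mdvd F (\sum_(i < n) 'X_i ^+ q * F^`M(i)).

(* Restriction F|_L of F to the line L spanned by the vectors P, Q:
   the binary form (s,t) |-> F(s P + t Q). *)
Definition restrict_line (n : nat) (R : ringType) (F : {mpoly R[n]})
  (P Q : 'I_n -> R) : {mpoly R[2]} :=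
  F \mPo [tuple P i *: bS R + Q i *: bT R | i < n].

Definition lin_indep2 (n : nat) (R : ringType) (P Q : 'I_n -> R) : Prop :=
  forall a b : R, (forall i, a * P i + b * Q i = 0) -> a = 0 /\ b = 0.

Definition is_pth_power (R : ringType) (p : nat) (G : {mpoly R[2]}) : Prop :=
  exists H : {mpoly R[2]}, G = H ^+ p.

Definition eval2 (R : ringType) (G : {mpoly R[2]}) (a b : R) : R :=
  G.@[fun i : 'I_2 => if val i == 0%N then a else b].

(* The point [a:b] of P^1(K) is defined over k (via iota). *)
Definition rational_pt (k K : fieldType) (iota : {rmorphism k -> K}) (a b : K) : Prop :=
  exists u v : k, (u != 0 \/ v != 0) /\ a * iota v = b * iota u.

Definition is_mult_at (K : fieldType) (G : {mpoly K[2]}) (a b : K) (m : nat) : Prop :=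
  let l := b *: bS K - a *: bT K in
  mdvd (l ^+ m) G /\ ~ mdvd (l ^+ m.+1) G.

(* Main.v *)
Require Import Defs.
From HB Require Import structures.
From mathcomp Require Import all_boot all_order all_algebra all_field.
From mathcomp Require Import mpoly.
From mathcomp Require Import ring.
Import GRing.Theory.
Local Open Scope ring_scope.

Module Helpers.
Set Implicit Arguments. Unset Strict Implicit. Unset Printing Implicit Defensive.

Section Dvd.
Context (n : nat) (R : comRingType).
Implicit Types (l x y z : {mpoly R[n]}).

Lemma mdvd0 l : mdvd l 0. Proof. by exists 0; rewrite mul0r. Qed.
Lemma mdvdl l : mdvd l l. Proof. by exists 1; rewrite mul1r. Qed.
Lemma mdvdD l x y : mdvd l x -> mdvd l y -> mdvd l (x + y).
Proof. by move=> [a ->] [b ->]; exists (a + b); rewrite mulrDl. Qed.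
Lemma mdvdN l x : mdvd l x -> mdvd l (- x).
Proof. by move=> [a ->]; exists (- a); rewrite mulNr. Qed.
Lemma mdvdB l x y : mdvd l x -> mdvd l y -> mdvd l (x - y).
Proof. by move=> hx hy; apply: mdvdD => //; apply: mdvdN. Qed.
Lemma mdvdMl l x y : mdvd l x -> mdvd l (y * x).
Proof. by move=> [a ->]; exists (y * a); rewrite mulrA. Qed.
Lemma mdvdMr l x y : mdvd l x -> mdvd l (x * y).
Proof. by move=> h; rewrite mulrC; apply: mdvdMl. Qed.
Lemma mdvdZ l x c : mdvd l x -> mdvd l (c *: x).
Proof. by move=> h; rewrite -mul_mpolyC; apply: mdvdMl. Qed.
Lemma mdvd_trans l x y : mdvd l x -> mdvd x y -> mdvd l y.
Proof. by move=> [a ->] [b ->]; exists (b * a); rewrite mulrA. Qed.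
Lemma mdvd_sum l (I : Type) (r : seq I) (P : pred I) (F : I -> {mpoly R[n]}) :
  (forall i, P i -> mdvd l (F i)) -> mdvd l (\sum_(i <- r | P i) F i).
Proof.
move=> h; apply: (big_ind (mdvd l)) => //; first exact: mdvd0.
by move=> ? ?; apply: mdvdD.
Qed.

Definition mcong l x y := mdvd l (x - y).

Lemma mcongM l x1 x2 y1 y2 : mcong l x1 y1 -> mcong l x2 y2 ->
  mcong l (x1 * x2) (y1 * y2).
Proof.
move=> h1 h2; rewrite /mcong.
have -> : x1 * x2 - y1 * y2 = x1 * (x2 - y2) + (x1 - y1) * y2 by ring.
by apply: mdvdD; [apply: mdvdMl | apply: mdvdMr].
Qed.

Lemma mcongX l x y e : mcong l x y -> mcong l (x ^+ e) (y ^+ e).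
Proof.
move=> h; elim: e => [|e ih]; first by rewrite !expr0 /mcong subrr; exact: mdvd0.
by rewrite !exprS; apply: mcongM.
Qed.

End Dvd.

Lemma comp_cong (R : comRingType) n k (f : {mpoly R[n]}) (lq1 lq2 : n.-tuple {mpoly R[k]}) l :
  (forall i, mdvd l (tnth lq1 i - tnth lq2 i)) -> mdvd l ((f \mPo lq1) - (f \mPo lq2)).
Proof.
move=> h; rewrite !comp_mpolyE -sumrB; apply: mdvd_sum => m _.
rewrite -scalerBr; apply: mdvdZ.
have : mcong l (\prod_(i < n) tnth lq1 i ^+ m i) (\prod_(i < n) tnth lq2 i ^+ m i).
  apply: (big_ind2 (mcong l)).
  - by rewrite /mcong subrr; exact: mdvd0.
  - by move=> ? ? ? ?; apply: mcongM.
  - by move=> i _; apply: mcongX; apply: h.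
by [].
Qed.

Section Prime.
Context (K : fieldType) (a b : K).
Hypothesis ab : a != 0 \/ b != 0.
Let l := b *: bS K - a *: bT K.

Lemma lin_eps : exists lq : 2.-tuple {mpoly K[2]},
  l \mPo lq = 0 /\ forall f, mdvd l (f - (f \mPo lq)).
Proof.
have key : forall lq : 2.-tuple {mpoly K[2]},
    (forall i, mdvd l ('X_i - tnth lq i)) -> forall f, mdvd l (f - (f \mPo lq)).
  move=> lq h f; rewrite -{1}[f]comp_mpoly_id; apply: comp_cong => i.
  by rewrite tnth_mktuple; apply: h.
have [b0|bn0] := eqVneq b 0.
  have an0 : a != 0 by case: ab => //; rewrite b0 eqxx.
  exists [tuple (if i == ord0 then bS K else 0) | i < 2]; split.
    rewrite /l /bS /bT comp_mpolyB !comp_mpolyZ !comp_mpolyXU -!tnth_nth !tnth_mktuple /=.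
    by rewrite b0 scale0r scaler0 subrr.
  apply: key => i; rewrite tnth_mktuple.
  case: i => [[|[|//]]] Hi /=.
    rewrite (_ : Ordinal Hi = ord0) ?eqxx ?subrr; last exact: val_inj.
    exact: mdvd0.
  rewrite subr0; exists (- a^-1)%:MP.
  rewrite /l b0 scale0r sub0r mul_mpolyC scalerN scaleNr opprK scalerA mulVf // scale1r.
  by rewrite /bT; congr (mpolyX _ _); apply: val_inj.
exists [tuple (if i == ord0 then (a / b) *: bT K else bT K) | i < 2]; split.
  rewrite /l /bS /bT comp_mpolyB !comp_mpolyZ !comp_mpolyXU -!tnth_nth !tnth_mktuple /=.
  by rewrite scalerA mulrC mulfVK // subrr.
apply: key => i; rewrite tnth_mktuple.
case: i => [[|[|//]]] Hi /=.
  rewrite (_ : Ordinal Hi = ord0) ?eqxx; last exact: val_inj.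
  exists (b^-1)%:MP; rewrite /l mul_mpolyC scalerBr !scalerA mulVf // scale1r mulrC.
  by rewrite /bS.
rewrite (_ : Ordinal Hi = ord_max); last exact: val_inj.
by rewrite /bT subrr; exact: mdvd0.
Qed.


Lemma lin_prime f g : mdvd l (f * g) -> mdvd l f \/ mdvd l g.
Proof.
have [lq [hl hf]] := lin_eps; move=> [c hc].
have : (f * g) \mPo lq = 0 by rewrite hc rmorphM /= hl mulr0.
rewrite rmorphM /= => /eqP; rewrite mulf_eq0 => /orP [] /eqP h; [left|right].
  by have := hf f; rewrite h subr0.
by have := hf g; rewrite h subr0.
Qed.

Lemma lin_meval (v : 'I_2 -> K) : l.@[v] = b * v ord0 - a * v ord_max.
Proof. by rewrite /l mevalB !mevalZ /bS /bT !mevalXU. Qed.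

Lemma lin_eval f : mdvd l f -> eval2 f a b = 0.
Proof.
move=> [c ->]; rewrite /eval2 mevalM lin_meval /=.
by rewrite (mulrC b a) subrr mulr0.
Qed.

Lemma lin_neq0 : l != 0.
Proof.
apply/negP => /eqP h.
case: ab => [an0|bn0].
  have := lin_meval (fun i => if val i == 0%N then 0 else 1).
  by rewrite h meval0 /= mulr0 mulr1 sub0r => /eqP; rewrite eq_sym oppr_eq0 (negPf an0).
have := lin_meval (fun i => if val i == 0%N then 1 else 0).
by rewrite h meval0 /= mulr0 mulr1 subr0 => /eqP; rewrite eq_sym (negPf bn0).
Qed.

Lemma lin_not_dvd_const c : c != 0 -> ~ mdvd l c%:MP.
Proof.
move=> cn0 /lin_eval; rewrite /eval2 mevalC => /eqP; by rewrite (negPf cn0).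
Qed.

End Prime.

Lemma mderivXU (R : nzRingType) n (i j : 'I_n) :
  ('X_i : {mpoly R[n]})^`M(j) = (i == j)%:R%:MP.
Proof.
rewrite mderivX mnm1E; have [->|ne] := eqVneq i j.
  by rewrite /= (_ : (U_(j) - U_(j))%MM = 0%MM) ?mpolyX0 ?scale1r //; apply/mnmP => x; rewrite mnmBE subnn mnm0E.
by rewrite /= scale0r mpolyC0.
Qed.

Section Chain.
Context (R : comRingType) (n k : nat) (lq : n.-tuple {mpoly R[k]}) (j : 'I_k).

Definition chainP (f : {mpoly R[n]}) :=
  (f \mPo lq)^`M(j) = \sum_(i < n) ((f^`M(i)) \mPo lq) * (tnth lq i)^`M(j).

Lemma chainP0 : chainP 0.
Proof.
rewrite /chainP comp_mpoly0 mderiv0 big1 // => i _.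
by rewrite mderiv0 comp_mpoly0 mul0r.
Qed.

Lemma chainPD f g : chainP f -> chainP g -> chainP (f + g).
Proof.
rewrite /chainP => hf hg; rewrite comp_mpolyD mderivD hf hg -big_split /=.
by apply: eq_bigr => i _; rewrite mderivD comp_mpolyD mulrDl.
Qed.

Lemma chainPZ c f : chainP f -> chainP (c *: f).
Proof.
rewrite /chainP => hf; rewrite comp_mpolyZ mderivZ hf scaler_sumr.
by apply: eq_bigr => i _; rewrite mderivZ comp_mpolyZ scalerAl.
Qed.

Lemma chainPM f g : chainP f -> chainP g -> chainP (f * g).
Proof.
rewrite /chainP => hf hg; rewrite rmorphM /= mderivM hf hg.
rewrite mulr_suml mulr_sumr -big_split /=.
apply: eq_bigr => i _; rewrite mderivM rmorphD /= !rmorphM /=; ring.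
Qed.

Lemma chainP1 : chainP 1.
Proof.
rewrite /chainP comp_mpoly1 -mpolyC1 mderivC big1 // => i _.
by rewrite mderivC comp_mpolyC mpolyC0 mul0r.
Qed.

Lemma chainPX i : chainP 'X_i.
Proof.
rewrite /chainP comp_mpolyXU -tnth_nth (bigD1 i) //= big1 ?addr0.
  by rewrite mderivXU eqxx comp_mpolyC mul1r.
by move=> i' ne; rewrite mderivXU eq_sym (negPf ne) comp_mpolyC mpolyC0 mul0r.
Qed.

Lemma chain_rule f : chainP f.
Proof.
rewrite [f]mpolyE; apply: (big_ind chainP); first exact: chainP0.
  by move=> ? ?; apply: chainPD.
move=> m _; apply: chainPZ; rewrite mpolyXE_id.
apply: (big_ind chainP); first exact: chainP1.
  by move=> ? ?; apply: chainPM.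
move=> i _; elim: (m i) => [|e ih]; first by rewrite expr0; exact: chainP1.
by rewrite exprS; apply: chainPM => //; apply: chainPX.
Qed.

End Chain.

Lemma mderiv_map (R S : nzRingType) (f : {rmorphism R -> S}) n (p : {mpoly R[n]}) i :
  map_mpoly f (p^`M(i)) = (map_mpoly f p)^`M(i).
Proof.
apply/mpolyP => m; rewrite mcoeff_map_mpoly !mcoeff_mderiv mcoeff_map_mpoly.
by rewrite raddfMn.
Qed.

Lemma mderivXn (R : comRingType) n (x : {mpoly R[n]}) i e :
  (x ^+ e.+1)^`M(i) = (x ^+ e * x^`M(i)) *+ e.+1.
Proof.
elim: e => [|e ih]; first by rewrite expr1 expr0 mul1r.
rewrite exprS mderivM ih mulrnAr mulrA -exprS (mulrC (x^`M(i))) -mulrS.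
by [].
Qed.

Section Euler.
Context (R : comRingType) (n : nat).

Lemma euler_term (m : 'X_{1..n}) (i : 'I_n) :
  'X_i * ('X_[m] : {mpoly R[n]})^`M(i) = (m i)%:R *: 'X_[m].
Proof.
rewrite mderivX -scalerAr; case E: (m i) => [|e]; first by rewrite !scale0r.
congr (_ *: _); rewrite -mpolyXD addmC submK //.
apply/mnm_lepP => j; rewrite mnm1E; case: eqP => [<-|]; by rewrite ?E.
Qed.

Lemma euler_mono (m : 'X_{1..n}) :
  \sum_(i < n) 'X_i * ('X_[m] : {mpoly R[n]})^`M(i) = (mdeg m)%:R *: 'X_[m].
Proof.
rewrite (eq_bigr _ (fun i _ => euler_term m i)) -scaler_suml mdegE natr_sum.
by [].
Qed.

Lemma euler (p : {mpoly R[n]}) d : p \is d.-homog ->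
  \sum_(i < n) 'X_i * p^`M(i) = d%:R *: p.
Proof.
move=> /dhomogP hd.
rewrite {1 2}[p]mpolyE scaler_sumr.
under eq_bigr => i _ do rewrite linear_sum mulr_sumr.
rewrite exchange_big /=; apply: eq_big_seq => m hm.
under eq_bigr => i _ do rewrite mderivZ -scalerAr.
rewrite -scaler_sumr euler_mono hd // !scalerA mulrC.
by [].
Qed.

End Euler.

Lemma comp_homog (R : comRingType) n k (F : {mpoly R[n]}) d (lq : n.-tuple {mpoly R[k]}) :
  F \is d.-homog -> (forall i, tnth lq i \is 1.-homog) -> (F \mPo lq) \is d.-homog.
Proof.
move=> /dhomogP hF hl; rewrite comp_mpolyE big_seq; apply: rpred_sum => m hm.
apply: rpredZ; rewrite -(hF m hm).
suff : \prod_(i < n) tnth lq i ^+ m i \is (\sum_(i < n) m i)%N.-homog by rewrite -mdegE.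
elim: (index_enum _) => [|i r ih]; first by rewrite !big_nil; exact: dhomog1.
rewrite !big_cons; apply: dhomogM => //.
by rewrite -[X in X.-homog]mul1n; apply: dhomogMn.
Qed.

Lemma frobq (k : finFieldType) p (pk : p \in [pchar k]) (x y : {mpoly k[2]}) :
  (x + y) ^+ #|k| = x ^+ #|k| + y ^+ #|k|.
Proof.
apply: exprDn_pchar.
have pA : p \in [pchar {mpoly k[2]}] by rewrite pchar_lalg.
rewrite (card_pprimeChar pk) pnatX; apply/orP; left.
rewrite (eq_pnat _ (pcharf_eq pA)); apply: pnat_id.
exact: pcharf_prime pk.
Qed.

Section Key.
Context (k : finFieldType) (p : nat) (pk : p \in [pchar k]) (n : nat)
  (F : {mpoly k[n.+1]}) (P Q : 'I_n.+1 -> k).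
Hypothesis hF : frob_nonclassical #|k| F.

Lemma key_dvd : let G := restrict_line F P Q in
  mdvd G (bS k ^+ #|k| * G^`M(ord0) + bT k ^+ #|k| * G^`M(ord_max)).
Proof.
move=> G; set lq := [tuple P i *: bS k + Q i *: bT k | i < n.+1].
have hG : G = F \mPo lq by [].
have d0 : forall i, (tnth lq i)^`M(ord0) = (P i)%:MP.
  move=> i; rewrite tnth_mktuple mderivD !mderivZ /bS /bT !mderivXU eqxx.
  by rewrite (_ : (ord_max == ord0 :> 'I_2) = false) // mpolyC0 scaler0 addr0 -mul_mpolyC mulr1.
have d1 : forall i, (tnth lq i)^`M(ord_max) = (Q i)%:MP.
  move=> i; rewrite tnth_mktuple mderivD !mderivZ /bS /bT !mderivXU eqxx.
  by rewrite (_ : (ord0 == ord_max :> 'I_2) = false) // mpolyC0 scaler0 add0r -mul_mpolyC mulr1.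
have hq : forall i, tnth lq i ^+ #|k| = (P i)%:MP * bS k ^+ #|k| + (Q i)%:MP * bT k ^+ #|k|.
  move=> i; rewrite tnth_mktuple (frobq pk) !exprZn !expf_card !mul_mpolyC //.
have [c hc] := hF.
exists (c \mPo lq).
rewrite hG -rmorphM /= -hc rmorph_sum /= !chain_rule.
rewrite [bS k ^+ _ * _]mulr_sumr [bT k ^+ _ * _]mulr_sumr -big_split /=.
apply: eq_bigr => i _; rewrite d0 d1 rmorphM /= rmorphXn /= comp_mpolyXU -tnth_nth hq.
ring.
Qed.

End Key.

Lemma alg0 (R : comRingType) (s t Us Ut U l L B A N : R) :
  s * (Us * (l * L) + U * (L * B * N)) + t * (Ut * (l * L) + U * (L * - A * N)) =
  L * (l * (s * Us + t * Ut) + N * U * (B * s - A * t)).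
Proof. ring. Qed.

Lemma alg1 (R : comRingType) (s t Us Ut U l L B A : R) (e : nat) :
  s * (Us * (l * L) + U * (L * B *+ e.+1)) + t * (Ut * (l * L) + U * (L * - A *+ e.+1)) =
  L * (l * (s * Us + t * Ut) + e.+1%:R * U * (B * s - A * t)).
Proof. by rewrite -(mulr_natr (L * B)) -(mulr_natr (L * - A)) alg0. Qed.

Lemma alg2 (R : comRingType) (l c x y : R) : l * c = l * x + y -> y = (c - x) * l.
Proof. move=> h; rewrite mulrBl (mulrC c) h; ring. Qed.

Lemma part2 (K : fieldType) p (pK : p \in [pchar K]) q (G : {mpoly K[2]}) a b m :
  (a != 0 \/ b != 0) ->
  mdvd G (bS K ^+ q * G^`M(ord0) + bT K ^+ q * G^`M(ord_max)) ->
  b * a ^+ q - a * b ^+ q != 0 ->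
  is_mult_at G a b m -> (p %| m)%N.
Proof.
move=> ab [C hC] hW [[U hU] nd].
set l := b *: bS K - a *: bT K in hU nd.
case: m hU nd => [|e] hU nd; first exact: dvdn0.
rewrite (dvdn_pcharf pK); apply/negPn/negP => nz.
have ls : l^`M(ord0) = b%:MP.
  rewrite /l mderivB !mderivZ /bS /bT !mderivXU eqxx.
  by rewrite (_ : (ord_max == ord0 :> 'I_2) = false) // mpolyC0 scaler0 subr0 -mul_mpolyC mulr1.
have lt : l^`M(ord_max) = (- a)%:MP.
  rewrite /l mderivB !mderivZ /bS /bT !mderivXU eqxx.
  rewrite (_ : (ord0 == ord_max :> 'I_2) = false) // mpolyC0 scaler0 sub0r.
  by rewrite -mul_mpolyC mulr1 mpolyCN.
have ln0 : l != 0 by apply: lin_neq0.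
pose W := b%:MP * bS K ^+ q - a%:MP * bT K ^+ q.
have key : l ^+ e * (l * (C * U)) =
    l ^+ e * (l * (bS K ^+ q * U^`M(ord0) + bT K ^+ q * U^`M(ord_max)) + (e.+1)%:R%:MP * U * W).
  have -> : l ^+ e * (l * (C * U)) = C * G by rewrite hU exprS; set L := l ^+ e; ring.
  rewrite -hC hU !mderivM !mderivXn ls lt /W mpolyCN.
  rewrite rmorph_nat exprS; exact: alg1.
have {}key := mulfI (expf_neq0 e ln0) key.
have : mdvd l ((e.+1)%:R%:MP * U * W).
  exists (C * U - (bS K ^+ q * U^`M(ord0) + bT K ^+ q * U^`M(ord_max))).
  exact: alg2 key.
case/(lin_prime ab) => [/(lin_prime ab) [hN|[V hV]]|hWd].
- move: hN; exact: (lin_not_dvd_const nz).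
- apply: nd; exists V; by rewrite hU hV -mulrA -exprS.
- move: hWd => /lin_eval; rewrite /eval2 /W mevalB !mevalM !mevalC !rmorphXn /= /bS /bT !mevalXU /=.
  by move/eqP; rewrite (negPf hW).
Qed.

Lemma rational_of (k : finFieldType) (K : fieldType) (iota : {rmorphism k -> K}) (a b : K) :
  b * a ^+ #|k| - a * b ^+ #|k| = 0 -> rational_pt iota a b.
Proof.
move=> h; have [b0|bn0] := eqVneq b 0.
  exists 1, 0; split; first by left; exact: oner_neq0.
  by rewrite b0 rmorph0 !mul0r mulr0.
set c := a / b.
have hc : c ^+ #|k| = c.
  rewrite /c expr_div_n; apply/eqP; rewrite eqr_div ?expf_neq0 //.
  by rewrite mulrC -subr_eq0 h.
have := congr1 (map_poly iota) (finField_genPoly k).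
rewrite rmorphB /= map_polyXn map_polyX rmorph_prod /= => /(congr1 (horner^~ c)).
rewrite !hornerE hc subrr horner_prod => /esym/eqP/prodf_eq0 [x _].
rewrite map_polyXsubC hornerXsubC subr_eq0 => /eqP cx.
exists x, 1; split; first by right; exact: oner_neq0.
by rewrite rmorph1 mulr1 -cx /c mulrC divfK.
Qed.

Lemma frob_root (k : finFieldType) p (pk : p \in [pchar k]) (x : k) : exists y, y ^+ p = x.
Proof.
have hc := card_pprimeChar pk.
set r := logn p _ in hc.
have : (0 < r)%N.
  case: (posnP r) => // r0; have := card_finNzRing_gt1 k.
  by rewrite hc r0 expn0.
case: r hc => // r hc _.
exists (x ^+ (p ^ r)); rewrite -exprM -expnSr.
by rewrite -[(p ^ r.+1)%N]hc expf_card.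
Qed.

Lemma pth_power (k : finFieldType) p (pk : p \in [pchar k]) (G : {mpoly k[2]}) :
  G^`M(ord0) = 0 -> G^`M(ord_max) = 0 -> is_pth_power p G.
Proof.
move=> h0 h1.
have hd : forall m, m \in msupp G -> forall i : 'I_2, (p %| m i)%N.
  move=> m hm i; case E: (m i) => [|e]; first by rewrite dvdn0.
  have hi : G^`M(i) = 0.
    case: i E => [[|[|//]] Hi] _.
      by rewrite (_ : Ordinal Hi = ord0) //; apply: val_inj.
    by rewrite (_ : Ordinal Hi = ord_max) //; apply: val_inj.
  have := congr1 (mcoeff (m - U_(i))) hi.
  rewrite mcoeff_mderiv mcoeff0 submK; last first.
    by apply/mnm_lepP => j; rewrite mnm1E; case: eqP => [<-|]; rewrite ?E.
  rewrite mnmBE mnm1E eqxx E subn1 /= -mulr_natr => /eqP; rewrite mulf_eq0.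
  rewrite mcoeff_eq0 hm /= -(dvdn_pcharf pk) => h.
  by [].
have fr : forall x : k, exists y, y ^+ p == x.
  by move=> x; have [y hy] := frob_root pk x; exists y; apply/eqP.
pose rt (x : k) := xchoose (fr x).
have rtE : forall x, rt x ^+ p = x by move=> x; apply/eqP; exact: (xchooseP (fr x)).
pose md (m : 'X_{1..2}) := [multinom (m i %/ p)%N | i < 2].
exists (\sum_(m <- msupp G) rt (G@_m) *: 'X_[md m]).
have pA : p \in [pchar {mpoly k[2]}] by rewrite pchar_lalg.
rewrite -(pFrobenius_autE pA) rmorph_sum /= {1}[G]mpolyE.
apply: eq_big_seq => m hm.
rewrite pFrobenius_autE exprZn rtE mpolyXn; congr (_ *: 'X_[_]).
apply/mnmP => i; rewrite mulmnE mnmE divnK //.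
exact: hd.
Qed.

Lemma msize_deriv_lt (R : nzRingType) n (p : {mpoly R[n]}) i :
  p != 0 -> (msize (p^`M(i)) < msize p)%N.
Proof.
move=> pn0.
have hp : (0 < msize p)%N by rewrite lt0n msize_poly_eq0.
suff : (msize (p^`M(i)) <= (msize p).-1)%N by rewrite -ltnS prednK.
rewrite [msize (p^`M(i))]msizeE; apply/bigmax_leqP_seq => m hm _.
have : (m + U_(i))%MM \in msupp p.
  rewrite mcoeff_msupp; move: hm; rewrite mcoeff_msupp mcoeff_mderiv.
  by apply: contraNneq => ->; rewrite mul0rn.
move/msize_mdeg_lt; rewrite mdegD mdeg1 addn1 => h.
by rewrite -ltnS prednK.
Qed.

Definition lu (K : fieldType) (u : K) : {mpoly K[2]} := 1 *: bS K - u *: bT K.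

Lemma eval_lu (K : fieldType) (u x y : K) : eval2 (lu u) x y = x - u * y.
Proof. by rewrite /eval2 /lu lin_meval /= mul1r. Qed.

Lemma eval_prod_lu (K : fieldType) (r : seq K) x y :
  eval2 (\prod_(v <- r) lu v) x y = \prod_(v <- r) (x - v * y).
Proof.
rewrite /eval2 rmorph_prod /=; apply: eq_bigr => v _; exact: eval_lu.
Qed.

Lemma lu_neq0 (K : fieldType) (u : K) : lu u != 0.
Proof. by apply: lin_neq0; right; exact: oner_neq0. Qed.

Lemma msize_lu (K : fieldType) (u : K) : msize (lu u) = 2%N.
Proof.
apply/eqP; rewrite eqn_leq; apply/andP; split.
  apply: leq_trans (msizeD_le _ _) _; rewrite msizeN geq_max.
  by rewrite !(leq_trans (msizeZ_le _ _)) // /bS /bT msizeX mdeg1.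
rewrite ltnNge; apply/negP => /msize1_polyC h.
have h1 := eval_lu u u 1; have h2 := eval_lu u 1 0.
move: h1 h2; rewrite h /eval2 !mevalC mulr1 subrr mulr0 subr0 => ->.
by move/eqP; rewrite eq_sym oner_eq0.
Qed.

Lemma prod_lu_neq0 (K : fieldType) (r : seq K) : \prod_(v <- r) lu v != 0.
Proof. by rewrite prodf_seq_neq0; apply/allP => v _; rewrite lu_neq0. Qed.

Lemma msize_prod_lu (K : fieldType) (r : seq K) :
  msize (\prod_(v <- r) lu v) = (size r).+1.
Proof.
elim: r => [|v r ih]; first by rewrite big_nil msize1.
by rewrite big_cons msizeM ?lu_neq0 ?prod_lu_neq0 // msize_lu ih.
Qed.

Lemma strip_lu (K : fieldType) (r : seq K) (X : {mpoly K[2]}) : uniq r ->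
  (forall u, u \in r -> mdvd (lu u) X) -> mdvd (\prod_(u <- r) lu u) X.
Proof.
elim: r X => [|u r ih] X /=; first by move=> _ _; rewrite big_nil; exists X; rewrite mulr1.
move=> /andP [ur ur'] h.
have [Y hY] := ih X ur' (fun v hv => h v (mem_behead (s := u :: r) hv)).
have H : mdvd (lu u) (Y * \prod_(v <- r) lu v) by rewrite -hY; apply: h; exact: mem_head.
have ab : u != 0 \/ (1 : K) != 0 by right; exact: oner_neq0.
case: (@lin_prime K u 1 ab _ _ H).
  move=> [Z hZ]; rewrite /mdvd big_cons; exists Z; by rewrite hY hZ mulrA.
move/lin_eval; rewrite eval_prod_lu.
move/eqP; rewrite prodf_seq_eq0 => /hasP [v hv /=]; rewrite mulr1 subr_eq0 => /eqP uv.
by move: ur; rewrite uv hv.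
Qed.

Lemma alg3 (R : comRingType) (s t Gs Gt G C D T Sq : R) :
  Sq * Gs + (T * t) * Gt = C * G -> s * Gs + t * Gt = D * G ->
  G * (C - D * T) = (Sq - s * T) * Gs.
Proof.
move=> h1 h2.
have -> : G * (C - D * T) = C * G - T * (D * G) by ring.
rewrite -h1 -h2; ring.
Qed.

Lemma euler2 (R : comRingType) (G : {mpoly R[2]}) d : G \is d.-homog ->
  bS R * G^`M(ord0) + bT R * G^`M(ord_max) = d%:R%:MP * G.
Proof.
move=> hd; rewrite mul_mpolyC -(euler hd) big_ord_recl big_ord1 /bS /bT.
by rewrite (_ : lift ord0 ord0 = ord_max :> 'I_2) //; apply: val_inj.
Qed.

Lemma lu_dvdW (k : finFieldType) (u : k) (q' : nat) (hq : #|k| = q'.+1) :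
  mdvd (lu u) (bS k ^+ #|k| - bS k * bT k ^+ q').
Proof.
set W := (X in mdvd _ X).
pose lq := [tuple (if i == ord0 then u *: bT k else bT k) | i < 2].
have h0 : W \mPo lq = 0.
  rewrite /W rmorphB /= rmorphM /= !rmorphXn /= /bS /bT !comp_mpolyXU -!tnth_nth !tnth_mktuple /=.
  rewrite exprZn expf_card.
  by rewrite -scalerAl -exprS -hq subrr.
have := comp_cong W (lq1 := [tuple 'X_i | i < 2]) (lq2 := lq) (l := lu u).
rewrite comp_mpoly_id h0 subr0; apply => i; rewrite !tnth_mktuple.
case: i => [[|[|//]] Hi] /=.
  rewrite (_ : Ordinal Hi = ord0) ?eqxx; last exact: val_inj.
  by exists 1; rewrite mul1r /lu scale1r.
rewrite (_ : Ordinal Hi = ord_max); last exact: val_inj.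
by rewrite /bT subrr; exact: mdvd0.
Qed.

Lemma part1 (k : finFieldType) p (pk : p \in [pchar k]) (G : {mpoly k[2]}) d :
  G != 0 -> G \is d.-homog ->
  mdvd G (bS k ^+ #|k| * G^`M(ord0) + bT k ^+ #|k| * G^`M(ord_max)) ->
  ~ is_pth_power p G ->
  exists a b : k, (a != 0 \/ b != 0) /\ eval2 G a b = 0.
Proof.
move=> Gn0 hd [C hC] npp.
case: (boolP [exists a : k, exists b : k, ((a != 0) || (b != 0)) && (eval2 G a b == 0)]).
  move=> /existsP [a /existsP [b /andP [/orP hab /eqP he]]]; by exists a, b.
rewrite negb_exists => /forallP nz0.
have nz : forall a b : k, (a != 0 \/ b != 0) -> mdvd (b *: bS k - a *: bT k) G -> False.
  move=> a b hab /lin_eval he; have := nz0 a; rewrite negb_exists => /forallP /(_ b).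
  by rewrite he eqxx andbT; case: hab => ->; rewrite ?orbT.
exfalso; apply: npp.
have [q' hq] : exists q', #|k| = q'.+2.
  have := card_finNzRing_gt1 k; case: #|k| => [|[|q']] //; by exists q'.
have heu := euler2 hd.
pose W := bS k ^+ #|k| - bS k * bT k ^+ q'.+1.
pose x := C - d%:R%:MP * bT k ^+ q'.+1.
have hGW : G * x = W * G^`M(ord0).
  by apply: alg3 heu; rewrite -exprSr -hq.
pose Pi := \prod_(u <- enum k) lu u.
have [r hr] : mdvd Pi W.
  by apply: strip_lu; [exact: enum_uniq | move=> u _; exact: lu_dvdW].
have Wn0 : W != 0.
  apply/eqP => W0; have := congr1 (fun f => eval2 f 1 0) W0.
  rewrite /W /eval2 mevalB mevalM !rmorphXn /= /bS /bT !mevalXU /= meval0.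
  by rewrite expr1n expr0n /= mulr0 subr0 => /eqP; rewrite oner_eq0.
have rn0 : r != 0 by apply: contraNneq Wn0; rewrite hr => ->; rewrite mul0r.
have Pin0 : Pi != 0 by exact: prod_lu_neq0.
have msW : (msize W <= #|k|.+1)%N.
  apply: leq_trans (msizeD_le _ _) _; rewrite msizeN geq_max.
  rewrite /bS /bT !mpolyXn -mpolyXD !msizeX mdegD !mdegMn !mdeg1 !mul1n hq.
  by rewrite add1n ltnSn.
have msr : (msize r <= 1)%N.
  move: msW; rewrite hr msizeM // msize_prod_lu -cardT.
  case: (msize r) => [|[|m]] //=.
  by rewrite leqNgt addSn ltnS leq_addl.
set c := r@_0.
have hrc : r = c%:MP by exact: msize1_polyC.
have cn0 : c != 0 by apply: contraNneq rn0; rewrite hrc => ->; rewrite mpolyC0.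
have one0 : (1 : k) != 0 by exact: oner_neq0.
have [x' hx'] : mdvd Pi x.
  apply: strip_lu; first exact: enum_uniq.
  move=> u _.
  have hux : mdvd (lu u) (G * x) by rewrite hGW; apply: mdvdMr; apply: lu_dvdW.
  case: (@lin_prime k u 1 (or_intror one0) _ _ hux) => // hG.
  by exfalso; apply: (nz u 1 (or_intror one0)).
have hGs : G * x' = c%:MP * G^`M(ord0).
  apply: (mulIf Pin0); move: hGW; rewrite hx' hr hrc.
  by rewrite mulrA => ->; rewrite mulrAC.
have Gs0 : G^`M(ord0) = 0.
  apply/eqP; apply/negPn/negP => Gsn0.
  have x'n0 : x' != 0.
    by apply: contraNneq Gsn0 => x'0; move: hGs; rewrite x'0 mulr0 => /esym/eqP; rewrite mulf_eq0 mpolyC_eq0 (negPf cn0).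
  have := msize_deriv_lt ord0 Gn0.
  rewrite -(msizeZ _ cn0) -mul_mpolyC -hGs msizeM //.
  have : (0 < msize x')%N by rewrite lt0n msize_poly_eq0.
  case: (msize x') => // m _; rewrite addnS /= ltnNge.
  by rewrite leq_addr.
have m1n0 : (-1 : k) != 0 by rewrite oppr_eq0 oner_eq0.
have tn0 : bT k != 0.
  have := @lin_neq0 k (-1) 0 (or_introl m1n0).
  by rewrite scale0r sub0r scaleN1r opprK.
have Gt0 : G^`M(ord_max) = 0.
  move: heu; rewrite Gs0 mulr0 add0r.
  have [d0|dn0] := eqVneq (d%:R : k) 0.
    by rewrite d0 mpolyC0 mul0r => /eqP; rewrite mulf_eq0 (negPf tn0) => /eqP.
  move=> ht; exfalso; apply: (nz (-1) 0 (or_introl m1n0)).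
  exists ((d%:R)^-1%:MP * G^`M(ord_max)).
  rewrite scale0r sub0r scaleN1r opprK -mulrA (mulrC _ (bT k)) ht mulrA -rmorphM /=.
  by rewrite mulVf // mul1r.
exact (pth_power pk Gs0 Gt0).
Qed.

End Helpers.
Import Helpers.

Theorem lemma2p2 (k : finFieldType) (p : nat) (n d : nat)
  (F : {mpoly k[n.+1]}) (P Q : 'I_n.+1 -> k) :
  prime p -> p \in [pchar k] ->
  F != 0 -> F \is d.-homog ->
  frob_nonclassical #|k| F ->
  lin_indep2 P Q ->
  restrict_line F P Q != 0 ->
  ~ is_pth_power p (restrict_line F P Q) ->
  (exists a b : k, (a != 0 \/ b != 0) /\ eval2 (restrict_line F P Q) a b = 0) /\
  (forall (K : closedFieldType) (iota : {rmorphism k -> K}) (a b : K) (m : nat),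
      (a != 0 \/ b != 0) ->
      eval2 (map_mpoly iota (restrict_line F P Q)) a b = 0 ->
      ~ rational_pt iota a b ->
      is_mult_at (map_mpoly iota (restrict_line F P Q)) a b m ->
      (p %| m)%N).
Proof.
move=> pp pk Fn0 hFd hfrob _ Gn0 npp.
have hkey := key_dvd pk P Q hfrob.
have hGd : restrict_line F P Q \is d.-homog.
  apply: comp_homog hFd _ => i; rewrite tnth_mktuple.
  apply: rpredD; apply: rpredZ; rewrite /bS /bT dhomogX.
  1,2: by apply/eqP; apply: mdeg1.
split; first exact (part1 pk Gn0 hGd hkey npp).
move=> K iota a b m hab _ hnr hmult.
have pK : p \in [pchar K] := rmorph_pchar iota pk.
apply: (part2 pK (q := #|k|) hab _ _ hmult).
  case: hkey => c hc; exists (map_mpoly iota c).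
  rewrite -rmorphM /= -hc rmorphD /= !rmorphM /= !rmorphXn /= !mderiv_map.
  by rewrite /bS /bT !map_mpolyX.
apply/eqP => h; apply: hnr; exact: rational_of h.
Qed.
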